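(* Let $K$ be any field and $m,d\geq 1$. The quadruple $(G_{m\wr d}, B_m^d, N_{m\wr d}, \Sigma_m\wr\Sigma_d)$ is a generalized Tits system in the sense of Iwahori. More precisely: $B_m^d\cap N_{m\wr d}=T_m^d$ (the diagonal matrices of $\mathrm{GL}_{md}(K)$) is normal in $N_{m\wr d}$, $N_{m\wr d}/T_m^d\cong \Sigma_m\wr\Sigma_d\cong W_0\rtimes\Omega$ with $W_0=\Sigma_m^d$ (generated by the involutions $s_a^{(j)}$, $1\le a\le m-1$, $1\le j\le d$) and $\Omega=\{1\}\wr\Sigma_d\cong\Sigma_d$, every $t\in\Omega$ normalizes $B_m^d$ and the set $\{s_a^{(j)}\}$, $B_m^d t\neq B_m^d$ for $t\ne 1$, and for every generator $s=s_a^{(j)}$ and every $w\in\Sigma_m\wr\Sigma_d$ one has $sB_m^dw\subseteq B_m^dswB_m^d\cup B_m^dwB_m^d$ and $sB_m^d\neq B_m^d s$.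
   Context: Notation: $\Sigma_n$ is the symmetric group. The wreath product $\Sigma_m\wr\Sigma_d=\Sigma_m^d\rtimes\Sigma_d$ has multiplication determined by $w(g_1,\dots,g_d)=(g_{w^{-1}(1)},\dots,g_{w^{-1}(d)})w$; its elements are written $(w_i)_i\sigma$ with $w_i\in\Sigma_m$, $\sigma\in\Sigma_d$. For $g\in\Sigma_m$, $g^{(j)}$ denotes $(1,\dots,1,g,1,\dots,1)$ ($g$ in position $j$); $s_a=(a\ a{+}1)\in\Sigma_m$, and $t_k=(k\ k{+}1)\in\Sigma_d$. We regard $\Sigma_m\wr\Sigma_d\subseteq\Sigma_{md}$ via $(w_i)_i\sigma:(j-1)m+a\mapsto(\sigma(j)-1)m+w_{\sigma(j)}(a)$ ($1\le j\le d$, $1\le a\le m$). Over a field $K$: $\mathrm{GL}_n=\mathrm{GL}_n(K)$, $B_n$ its upper triangular matrices, $T_n$ its diagonal matrices. $N_{m\wr d}\subseteq\mathrm{GL}_{md}$ is the group of monomial matrices whose underlying permutation lies in $\Sigma_m\wr\Sigma_d\subseteq\Sigma_{md}$; $B_m^d\subseteq\mathrm{GL}_{md}$ is the group of block diagonal matrices $\mathrm{diag}(b_1,\dots,b_d)$ with $b_i\in B_m$; $G_{m\wr d}:=\langle B_m^d,N_{m\wr d}\rangle\subseteq\mathrm{GL}_{md}$. Elements of $\Sigma_m\wr\Sigma_d$ are identified with cosets in $N_{m\wr d}/T_m^d$, so expressions like $BwB$ are well defined. A generalized Tits system (Iwahori) is a quadruple $(G,B,N,W)$ with $G=\langle B,N\rangle$,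 $B\cap N$ normal in $N$, $W=N/(B\cap N)\cong W_0\rtimes\Omega$ where $W_0$ is generated by involutions $s_i$ ($i\in I$), every $t\in\Omega$ normalizes $B$ and $\{s_i\}$, $Bt\ne B$ unless $t=1$, and for all $s=s_i$, $w\in W$: $sBw\subseteq BswB\cup BwB$ and $sB\ne Bs$. *)

(* Defs.v *)
From mathcomp Require Import all_boot all_order all_algebra all_fingroup.
From mathcomp Require Import zify.

Set Implicit Arguments.
Unset Strict Implicit.
Unset Printing Implicit Defensive.
Import GRing.Theory.
Local Open Scope ring_scope.

(* Index set {1,...,md} is modelled by 'I_(d*m) (0-based): the pair     *)
(* (j,a) with j : 'I_d (block), a : 'I_m (position in block) is the     *)
(* index j*m + a  (the paper's (j-1)m + a, shifted to 0-based).         *)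

Lemma idx_subproof (m d : nat) (j : 'I_d) (a : 'I_m) : (j * m + a < d * m)%N.
Proof. case: j a => j Hj [a Ha] /=. nia. Qed.

Definition idx (m d : nat) (j : 'I_d) (a : 'I_m) : 'I_(d * m) :=
  Ordinal (idx_subproof j a).

Lemma blk_subproof (m d : nat) (i : 'I_(d * m)) : (i %/ m < d)%N.
Proof.
case: i => i Hi /=. case: m Hi => [|m] Hi; first by rewrite muln0 in Hi.
by rewrite ltn_divLR.
Qed.

Lemma pos_subproof (m d : nat) (i : 'I_(d * m)) : (i %% m < m)%N.
Proof.
case: i => i Hi /=. case: m Hi => [|m] Hi; first by rewrite muln0 in Hi.
by rewrite ltn_mod.
Qed.

Definition blk (m d : nat) (i : 'I_(d * m)) : 'I_d := Ordinal (blk_subproof i).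
Definition pos (m d : nat) (i : 'I_(d * m)) : 'I_m := Ordinal (pos_subproof i).

Lemma idx_blk_pos (m d : nat) (i : 'I_(d * m)) : idx (blk i) (pos i) = i.
Proof. apply: val_inj => /=. by rewrite -divn_eq. Qed.

Lemma idx_inj (m d : nat) (j j' : 'I_d) (a a' : 'I_m) :
  idx j a = idx j' a' -> j = j' /\ a = a'.
Proof.
move=> /(congr1 val) /= E.
have Hm : (0 < m)%N by case: (a) => x; case: (m).
have Ea : (a = a' :> nat).
  by have := congr1 (modn^~ m) E; rewrite !modnMDl !modn_small.
split; apply: val_inj => /=; last by [].
move: E; rewrite Ea => /addIn /eqP; rewrite eqn_mul2r => /orP[/eqP m0|/eqP //].
by rewrite m0 in Hm.
Qed.

Definition emb_fun (m d : nat) (w : {ffun 'I_d -> {perm 'I_m}}) (s : {perm 'I_d})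
  (i : 'I_(d * m)) : 'I_(d * m) :=
  idx (s (blk i)) (w (s (blk i)) (pos i)).

Lemma emb_fun_inj (m d : nat) w s : injective (@emb_fun m d w s).
Proof.
move=> i i' /idx_inj [E1 E2].
have Eb : blk i = blk i' by apply: (perm_inj E1).
rewrite E1 in E2. have Ep := perm_inj E2.
by rewrite -(idx_blk_pos i) -(idx_blk_pos i') Eb Ep.
Qed.

Definition emb (m d : nat) (w : {ffun 'I_d -> {perm 'I_m}}) (s : {perm 'I_d}) :
  {perm 'I_(d * m)} := perm (@emb_fun_inj m d w s).

Definition Wr (m d : nat) : {set {perm 'I_(d * m)}} :=
  [set emb w s | w : {ffun 'I_d -> {perm 'I_m}}, s : {perm 'I_d}].

Definition W0 (m d : nat) : {set {perm 'I_(d * m)}} :=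
  [set emb w 1%g | w : {ffun 'I_d -> {perm 'I_m}}].

Definition Omega (m d : nat) : {set {perm 'I_(d * m)}} :=
  [set emb [ffun=> (1%g : {perm 'I_m})] s | s : {perm 'I_d}].

Definition sgen (m d : nat) (j : 'I_d) (a b : 'I_m) : {ffun 'I_d -> {perm 'I_m}} :=
  [ffun i => if i == j then tperm a b else 1%g].

Definition Sgen (m d : nat) : {set {perm 'I_(d * m)}} :=
  [set p : {perm 'I_(d * m)} | [exists j : 'I_d, exists a : 'I_m, exists b : 'I_m,
     (b == a.+1 :> nat) && (p == emb (sgen j a b) 1%g)]].

Definition upper_tri {K : fieldType} (m : nat) (b : 'M[K]_m) : Prop :=
  forall a a' : 'I_m, (a' < a)%N -> b a a' = 0.

Definition Bm {K : fieldType} (m : nat) (b : 'M[K]_m) : Prop :=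
  b \in unitmx /\ upper_tri b.

Definition Bset {K : fieldType} (m d : nat) (A : 'M[K]_(d * m)) : Prop :=
  exists b : 'I_d -> 'M[K]_m, (forall j, Bm (b j)) /\
    forall (j j' : 'I_d) (a a' : 'I_m),
      A (idx j a) (idx j' a') = if j == j' then b j a a' else 0.

Definition Tset {K : fieldType} (m d : nat) (A : 'M[K]_(d * m)) : Prop :=
  A \in unitmx /\ is_diag_mx A.

Definition mono_with {K : fieldType} (n : nat) (A : 'M[K]_n) (p : {perm 'I_n}) : Prop :=
  forall i k : 'I_n, (A i k != 0) = (i == p k).

Definition Nset {K : fieldType} (m d : nat) (A : 'M[K]_(d * m)) : Prop :=
  exists2 p, p \in Wr m d & mono_with A p.

(* the permutation matrix of p (a representative of the coset p T) *)
Definition mon {K : fieldType} (n : nat) (p : {perm 'I_n}) : 'M[K]_n :=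
  \matrix_(i, k) ((i == p k)%:R : K).

Definition inBcoset {K : fieldType} (m d : nat) (X Y : 'M[K]_(d * m)) (A : 'M[K]_(d * m)) : Prop :=
  exists2 b, Bset b & A = X *m b *m Y.

Definition inBdcoset {K : fieldType} (m d : nat) (X : 'M[K]_(d * m)) (A : 'M[K]_(d * m)) : Prop :=
  exists b1 b2, [/\ Bset b1, Bset b2 & A = b1 *m X *m b2].

(* Main.v *)
Require Import Defs.
From mathcomp Require Import all_boot all_order all_algebra all_fingroup.
From mathcomp Require Import zify.
Set Implicit Arguments.
Unset Strict Implicit.
Unset Printing Implicit Defensive.
Import GRing.Theory.
Local Open Scope ring_scope.

Section Comb.
Variables m d : nat.
Local Notation n := (d * m)%N.

Lemma blk_idx (j : 'I_d) (a : 'I_m) : blk (idx j a) = j.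
Proof. by have [] := idx_inj (idx_blk_pos (idx j a)). Qed.
Lemma pos_idx (j : 'I_d) (a : 'I_m) : pos (idx j a) = a.
Proof. by have [] := idx_inj (idx_blk_pos (idx j a)). Qed.

Lemma idx_eq (j j' : 'I_d) (a a' : 'I_m) :
  (idx j a == idx j' a') = (j == j') && (a == a').
Proof.
apply/eqP/andP => [/idx_inj [-> ->] //|[/eqP -> /eqP ->] //].
Qed.

Lemma ltn_idx (j : 'I_d) (a a' : 'I_m) : (idx j a < idx j a')%N = (a < a')%N.
Proof. by rewrite /= ltn_add2l. Qed.

Lemma ltn_sameblk (i k : 'I_n) : blk i = blk k -> (i < k)%N = (pos i < pos k)%N.
Proof. by move=> E; rewrite -{1}(idx_blk_pos i) -{1}(idx_blk_pos k) E ltn_idx. Qed.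

Lemma idx_ind (P : 'I_n -> Prop) : (forall j a, P (idx j a)) -> forall i, P i.
Proof. by move=> H i; rewrite -(idx_blk_pos i). Qed.

Lemma embE (w : {ffun 'I_d -> {perm 'I_m}}) (s : {perm 'I_d}) (i : 'I_n) : emb w s i = idx (s (blk i)) (w (s (blk i)) (pos i)).
Proof. by rewrite /emb permE. Qed.

Lemma emb_idx (w : {ffun 'I_d -> {perm 'I_m}}) (s : {perm 'I_d}) (j : 'I_d) (a : 'I_m) : emb w s (idx j a) = idx (s j) (w (s j) a).
Proof. by rewrite embE blk_idx pos_idx. Qed.

Definition wmul (w : {ffun 'I_d -> {perm 'I_m}}) (s' : {perm 'I_d}) w' :
  {ffun 'I_d -> {perm 'I_m}} := [ffun l => (w (s'^-1 l) * w' l)%g].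

Lemma embM (w w' : {ffun 'I_d -> {perm 'I_m}}) (s s' : {perm 'I_d}) : (emb w s * emb w' s' = emb (wmul w s' w') (s * s'))%g.
Proof.
apply/permP; apply: idx_ind => j a.
by rewrite permM !emb_idx ffunE !permM permK.
Qed.

Definition w1 : {ffun 'I_d -> {perm 'I_m}} := [ffun=> 1%g].

Lemma emb1 : emb w1 1 = 1%g.
Proof. by apply/permP; apply: idx_ind => j a; rewrite emb_idx !ffunE !perm1. Qed.

Lemma embV (w : {ffun 'I_d -> {perm 'I_m}}) (s : {perm 'I_d}) : ((emb w s)^-1 = emb [ffun l => (w (s l))^-1] s^-1)%g.
Proof.
apply/esym/eqP; rewrite eq_sym eq_invg_mul embM mulgV.
have -> : wmul w s^-1 [ffun l => (w (s l))^-1]%g = w1.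
  by apply/ffunP => l; rewrite !ffunE invgK mulgV.
by rewrite emb1.
Qed.

Lemma sgenE (j : 'I_d) (a b : 'I_m) : emb (sgen j a b) 1 = tperm (idx j a) (idx j b).
Proof.
apply/permP; apply: idx_ind => j' c; rewrite emb_idx perm1 ffunE.
case: eqP => [->|/eqP ne].
  case: (tpermP a b c) => [->|->|na nb]; rewrite ?tpermL ?tpermR // tpermD //.
    by rewrite idx_eq eqxx /=; apply/eqP => E; apply: na.
  by rewrite idx_eq eqxx /=; apply/eqP => E; apply: nb.
by rewrite perm1 tpermD // idx_eq eq_sym (negPf ne).
Qed.

End Comb.
Section Grp.
Variables m d : nat.
Local Notation n := (d * m)%N.
Local Notation wT := {ffun 'I_d -> {perm 'I_m}}.

Lemma mem_Wr (w : wT) s : emb w s \in Wr m d.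
Proof. by apply/imset2P; exists w s. Qed.

Lemma mem_W0 (w : wT) : emb w 1 \in W0 m d.
Proof. by apply/imsetP; exists w. Qed.

Lemma mem_Om s : emb (w1 m d) s \in Omega m d.
Proof. by apply/imsetP; exists s. Qed.

Lemma Wr_group : group_set (Wr m d).
Proof.
apply/group_setP; split; first by rewrite -emb1 mem_Wr.
move=> x y /imset2P [w s _ _ ->] /imset2P [w' s' _ _ ->].
by rewrite embM mem_Wr.
Qed.

Lemma W0_group : group_set (W0 m d).
Proof.
apply/group_setP; split; first by rewrite -emb1 /w1 mem_W0.
move=> x y /imsetP [w _ ->] /imsetP [w' _ ->].
by rewrite embM mulg1 mem_W0.
Qed.

Lemma W0_Wr : W0 m d \subset Wr m d.
Proof. by apply/subsetP => x /imsetP [w _ ->]; rewrite mem_Wr. Qed.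

Lemma W0_normal : (W0 m d <| Wr m d)%g.
Proof.
apply/andP; split; first exact: W0_Wr.
have H : forall x y, x \in Wr m d -> y \in W0 m d -> (y ^ x)%g \in W0 m d.
  move=> x y /imset2P [w s _ _ ->] /imsetP [v _ ->].
  by rewrite conjgE embV !embM mul1g mulVg mem_W0.
apply/subsetP => x Hx; rewrite inE; apply/subsetP => z.
rewrite mem_conjg => Hz; rewrite -(conjgKV x z); apply: H => //.
Qed.

Lemma W0_Omega : (W0 m d * Omega m d = Wr m d)%g.
Proof.
apply/eqP; rewrite eqEsubset; apply/andP; split; apply/subsetP => x.
  by case/mulsgP => y z /imsetP [w _ ->] /imsetP [s _ ->] ->; rewrite embM mem_Wr.
case/imset2P => w s _ _ ->.
have -> : emb w s = (emb [ffun j => w (s j)] 1 * emb (w1 m d) s)%g.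
  by apply/permP; apply: idx_ind => j a; rewrite permM !emb_idx !ffunE !perm1; idtac.
by apply: mem_mulg; [apply: mem_W0 | apply: mem_Om].
Qed.

Lemma W0_Omega1 : (0 < m)%N -> (W0 m d :&: Omega m d = 1)%g.
Proof.
move=> m0; apply/eqP; rewrite eqEsubset; apply/andP; split; last first.
  by rewrite sub1set inE -{1}(emb1 m d) mem_W0 -emb1 mem_Om.
apply/subsetP => x.
rewrite inE => /andP [/imsetP [w _ ->] /imsetP [s _ E]].
have s1 : s = 1%g.
  apply/permP => j; have := congr1 (fun p : {perm 'I_n} => blk (p (idx j (Ordinal m0)))) E.
  rewrite /= !emb_idx !blk_idx perm1; congruence.
by rewrite E s1 emb1 inE.
Qed.

Lemma Sgen_inv s : s \in Sgen m d -> s != 1%g /\ (s * s = 1)%g.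
Proof.
rewrite inE => /existsP [j /existsP [a /existsP [b /andP [/eqP ab /eqP ->]]]].
rewrite sgenE tperm2; split => //; apply/eqP => /permP /(_ (idx j a)).
rewrite tpermL perm1 => /idx_inj [_ E]; move: ab; rewrite E; lia.
Qed.

End Grp.
Section Gen.
Variables m d : nat.
Local Notation n := (d * m)%N.
Local Notation wT := {ffun 'I_d -> {perm 'I_m}}.

Lemma Om_conj_tperm s (j : 'I_d) (a b : 'I_m) :
  ((tperm (idx j a) (idx j b)) ^ emb (w1 m d) s = tperm (idx (s j) a) (idx (s j) b))%g.
Proof. by rewrite tpermJ !emb_idx !ffunE !perm1. Qed.

Lemma Sgen_conj t z : t \in Omega m d -> z \in Sgen m d -> (z ^ t)%g \in Sgen m d.
Proof.
move=> /imsetP [s _ ->]; rewrite !inE.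
move=> /existsP [j /existsP [a /existsP [b /andP [ab /eqP ->]]]].
apply/existsP; exists (s j); apply/existsP; exists a; apply/existsP; exists b.
by rewrite ab /= sgenE Om_conj_tperm sgenE.
Qed.

Lemma Om_inv t : t \in Omega m d -> (t^-1)%g \in Omega m d.
Proof.
move=> /imsetP [s _ ->]; rewrite embV.
have -> : [ffun l => ((w1 m d) (s l))^-1]%g = w1 m d by apply/ffunP => l; rewrite !ffunE invg1.
exact: mem_Om.
Qed.

Lemma Sgen_norm t : t \in Omega m d -> (Sgen m d :^ t = Sgen m d)%g.
Proof.
move=> Ht; apply/eqP; rewrite eqEsubset; apply/andP; split; apply/subsetP => z.
  by rewrite mem_conjg => Hz; rewrite -(conjgKV t z); apply: Sgen_conj.
by move=> Hz; rewrite mem_conjg; apply: Sgen_conj => //; apply: Om_inv.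
Qed.

Definition single (j : 'I_d) (g : {perm 'I_m}) : wT := [ffun i => if i == j then g else 1%g].
Definition phi j g := emb (single j g) 1.

Lemma phiM j g h : phi j (g * h)%g = (phi j g * phi j h)%g.
Proof.
rewrite /phi embM mulg1; congr emb; apply/ffunP => l.
by rewrite !ffunE invg1 perm1; case: eqP => _ //; rewrite mulg1.
Qed.

Lemma phi1 j : phi j 1 = 1%g.
Proof.
rewrite /phi -(emb1 m d); congr emb; apply/ffunP => l.
by rewrite !ffunE; case: eqP.
Qed.

Lemma phi_adj j (x y : 'I_m) : (val y = x.+1) -> phi j (tperm x y) \in Sgen m d.
Proof.
move=> E; rewrite inE; apply/existsP; exists j; apply/existsP; exists x; apply/existsP; exists y.
by rewrite E eqxx /= /phi sgenE -sgenE.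
Qed.

Lemma phi_tperm_lt j k : forall x y : 'I_m, val y = (x + k.+1)%N ->
  phi j (tperm x y) \in <<Sgen m d>>%g.
Proof.
elim: k => [|k IH] x y E.
  by apply: mem_gen; apply: phi_adj; rewrite E addn1.
have Hy' : (y.-1 < m)%N by case: y E => [y Hy] /= E; lia.
set y' := Ordinal Hy'.
have E' : val y' = (x + k.+1)%N by rewrite /= E; lia.
have Hu : phi j (tperm y' y) \in <<Sgen m d>>%g.
  by apply: mem_gen; apply: phi_adj; rewrite /= E; lia.
have Ht : tperm x y = (tperm y' y * tperm x y' * tperm y' y)%g.
  have nxy' : x != y' by apply/eqP => /(congr1 val); rewrite E' => /eqP; rewrite -{1}[val x]addn0 eqn_add2l.
  have nxy : x != y by apply/eqP => /(congr1 val); rewrite E => /eqP; rewrite -{1}[val x]addn0 eqn_add2l.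
  rewrite -mulgA -{1}(tpermV y' y) -conjgE tpermJ tpermL tpermD //.
  - by rewrite eq_sym.
  - by rewrite eq_sym.
rewrite Ht !phiM; apply: groupM; [apply: groupM|] => //; exact: IH.
Qed.

Lemma phi_gen j g : phi j g \in <<Sgen m d>>%g.
Proof.
have [ts -> _] := prod_tpermP g.
elim: ts => [|[x y] ts IH]; first by rewrite big_nil phi1 group1.
rewrite big_cons phiM; apply: groupM => //=.
case: (ltngtP x y) => [lt|lt|/val_inj ->]; last by rewrite tperm1 phi1 group1.
  by apply: (@phi_tperm_lt j (y - x.+1)%N x y) => /=; lia.
by rewrite tpermC; apply: (@phi_tperm_lt j (x - y.+1)%N y x) => /=; lia.
Qed.

Lemma W0_gen : W0 m d = <<Sgen m d>>%g.
Proof.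
apply/eqP; rewrite eqEsubset; apply/andP; split.
  apply/subsetP => x /imsetP [w _ ->].
  suff H : forall k (w : wT), (forall i : 'I_d, (k <= i)%N -> w i = 1%g) -> emb w 1 \in <<Sgen m d>>%g.
    by apply: (H d) => i; rewrite leqNgt ltn_ord.
  elim=> [|k IH] v Hv.
    have -> : v = w1 m d by apply/ffunP => l; rewrite ffunE Hv.
    by rewrite emb1 group1.
  case: (ltnP k d) => [kd|dk]; last by apply: IH => i ki; apply: Hv; have := ltn_ord i; lia.
  set jk := Ordinal kd.
  set v' : wT := [ffun i => if i == jk then 1%g else v i].
  have -> : v = wmul v' 1 (single jk (v jk)).
    apply/ffunP => l; rewrite !ffunE invg1 perm1.
    by case: (l =P jk) => [->|_]; rewrite ?mul1g ?mulg1.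
  have -> : emb (wmul v' 1 (single jk (v jk))) 1 = (emb v' 1 * phi jk (v jk))%g.
    by rewrite /phi embM mulg1.
  apply: groupM; last exact: phi_gen.
  apply: IH => i ki; rewrite ffunE; case: eqP => // /eqP ne; apply: Hv.
  by move: ne; rewrite -val_eqE /=; lia.
rewrite (gen_subG _ (Group (W0_group m d))); apply/subsetP => x.
rewrite inE => /existsP [j /existsP [a /existsP [b /andP [_ /eqP ->]]]].
exact: mem_W0.
Qed.

End Gen.
Section MatBasic.
Variable K : fieldType.

Lemma monE k (p : {perm 'I_k}) i j : (mon p : 'M[K]_k) i j = (i == p j)%:R.
Proof. by rewrite mxE. Qed.

Lemma mon_perm k (p : {perm 'I_k}) : (mon p : 'M[K]_k) = perm_mx (p^-1)%g.
Proof.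
apply/matrixP => i j; rewrite !mxE; congr (_ %:R).
by rewrite (canF_eq (permKV p)).
Qed.

Lemma mul_mon_mx k l (p : {perm 'I_k}) (X : 'M[K]_(k, l)) :
  mon p *m X = \matrix_(i, j) X ((p^-1)%g i) j.
Proof. by rewrite mon_perm -row_permE; apply/matrixP => i j; rewrite !mxE. Qed.

Lemma mul_mx_mon k l (p : {perm 'I_k}) (X : 'M[K]_(l, k)) :
  X *m mon p = \matrix_(i, j) X i (p j).
Proof. by rewrite mon_perm -col_permE; apply/matrixP => i j; rewrite !mxE. Qed.

Lemma monM k (p q : {perm 'I_k}) : (mon p : 'M[K]_k) *m mon q = mon (q * p).
Proof. by rewrite !mon_perm -perm_mxM invMg. Qed.

Lemma mon1 k : (mon 1 : 'M[K]_k) = 1%:M.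
Proof. by rewrite mon_perm invg1 perm_mx1. Qed.

Lemma mon_unit k (p : {perm 'I_k}) : (mon p : 'M[K]_k) \in unitmx.
Proof. by rewrite mon_perm unitmx_perm. Qed.

Lemma invmx_mon k (p : {perm 'I_k}) : invmx (mon p : 'M[K]_k) = mon (p^-1)%g.
Proof.
rewrite -[RHS]mul1mx -(mulVmx (mon_unit p)) -mulmxA monM mulVg mon1 mulmx1 //.
Qed.

Lemma det_up k (A : 'M[K]_k) : (forall i j : 'I_k, (j < i)%N -> A i j = 0) ->
  \det A = \prod_i A i i.
Proof.
move=> H; rewrite -det_tr det_trig; last by apply/is_trig_mxP => i j lt; rewrite mxE H.
by apply: eq_bigr => i _; rewrite mxE.
Qed.

Lemma unit_up k (A : 'M[K]_k) : (forall i j : 'I_k, (j < i)%N -> A i j = 0) ->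
  (A \in unitmx) <-> (forall i, A i i != 0).
Proof.
move=> H; rewrite unitmxE det_up // unitfE; split.
  by move/prodf_neq0 => H' i; apply: H'.
by move=> H'; apply/prodf_neq0 => i _; apply: H'.
Qed.

Lemma mono_E k (A : 'M[K]_k) p : mono_with A p -> forall i j, A i j = if i == p j then A i j else 0.
Proof. by move=> H i j; case: ifP => // E; apply/eqP; move: (H i j); rewrite E => /negbFE. Qed.

End MatBasic.
Section MatB.
Variable K : fieldType.
Variables m d : nat.
Local Notation n := (d * m)%N.
Local Notation M := ('M[K]_(d * m)).

Definition BB (A : M) := [/\ forall i k : 'I_n, (k < i)%N -> A i k = 0,
  forall i, A i i != 0 & forall i k : 'I_n, blk i != blk k -> A i k = 0].

Lemma Bset_BB (A : M) : Bset A <-> BB A.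
Proof.
split.
  case=> b [Hb HA].
  have HA' : forall i k : 'I_n, A i k = if blk i == blk k then b (blk i) (pos i) (pos k) else 0.
    move=> i k; rewrite -{1}(idx_blk_pos i) -{1}(idx_blk_pos k) HA.
    by case: eqP => // <-.
  split.
  - move=> i k lt; rewrite HA'; case: eqP => // E.
    have [_ Hu] := Hb (blk i); apply: Hu; by rewrite -(ltn_sameblk (esym E)).
  - move=> i; rewrite HA' eqxx; have [Hu Ht] := Hb (blk i).
    by move/(unit_up Ht): Hu; apply.
  - by move=> i k /negPf E; rewrite HA' E.
case=> Hl Hd Hbk.
exists (fun j => \matrix_(a, a') A (idx j a) (idx j a')); split.
  move=> j.
  have Ht : upper_tri (\matrix_(a, a') A (idx j a) (idx j a')).
    by move=> a a' lt; rewrite mxE Hl // ltn_idx.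
  split => //; apply/(unit_up Ht) => a; rewrite mxE; exact: Hd.
move=> j j' a a'; case: eqP => [<-|/eqP ne]; first by rewrite mxE.
by apply: Hbk; rewrite !blk_idx.
Qed.

Lemma Tset_diag (A : M) : Tset A -> forall i, A i i != 0.
Proof.
case=> Hu /is_diag_mxP Hd; apply/(unit_up _).1 => //.
by move=> i j lt; apply: Hd; rewrite neq_ltn lt orbT.
Qed.

Lemma diag_Tset (A : M) : (forall i k, i != k -> A i k = 0) -> (forall i, A i i != 0) -> Tset A.
Proof.
move=> Ho Hd.
have Hu : forall i j : 'I_n, (j < i)%N -> A i j = 0.
  by move=> i j lt; apply: Ho; apply/eqP => E; move: lt; rewrite E ltnn.
split; first by apply/(unit_up Hu).2.
by apply/is_diag_mxP => i k ne; apply: Ho; apply: contra ne => /eqP ->.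
Qed.

Lemma Tset_BB (A : M) : Tset A -> BB A.
Proof.
move=> HT; have Hd := Tset_diag HT; case: HT => _ /is_diag_mxP Ho; split => //.
  by move=> i k lt; apply: Ho; rewrite neq_ltn lt orbT.
by move=> i k ne; apply: Ho; apply: contra ne => /eqP /val_inj ->.
Qed.

Lemma mono_Tset (A : M) p : mono_with A p -> (p = 1%g <-> Tset A).
Proof.
move=> H; split.
  move=> p1; apply: diag_Tset.
    by move=> i k ne; apply/eqP; move: (H i k); rewrite p1 perm1 (negPf ne) => /negbFE.
  by move=> i; rewrite H p1 perm1.
move=> /Tset_diag Hd; apply/permP => i; rewrite perm1; apply/esym/eqP.
by rewrite -H.
Qed.

Lemma part1 (A : M) : (0 < m)%N -> Bset A /\ Nset A <-> Tset A.
Proof.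
move=> m0; split.
  case=> /Bset_BB [_ Hd _] [p _ H]; apply/(mono_Tset H).
  by apply/permP => i; rewrite perm1; apply/esym/eqP; rewrite -H.
move=> HT; split; first by apply/Bset_BB; apply: Tset_BB.
exists 1%g; first by rewrite -emb1 mem_Wr.
move=> i k; rewrite perm1; case: (i =P k) => [->|/eqP ne]; first exact: Tset_diag.
have Ho : A i k = 0.
  by case: HT => _ /is_diag_mxP Ho; apply: Ho; apply: contra ne => /eqP /val_inj ->.
by rewrite Ho eqxx.
Qed.

End MatB.
Section Mono.
Variable K : fieldType.
Variable k : nat.
Local Notation M := ('M[K]_k).

Lemma mono_mul (A A' : M) p p' : mono_with A p -> mono_with A' p' ->
  mono_with (A *m A') (p' * p)%g.
Proof.
move=> H H' i j; rewrite mxE (bigD1 (p' j)) //= big1 ?addr0.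
  by rewrite mulf_eq0 negb_or H H' eqxx andbT permM.
by move=> l ne; rewrite (mono_E H' l j) (negPf ne) mulr0.
Qed.

Lemma mono_mon p : mono_with (mon p : M) p.
Proof. by move=> i j; rewrite monE; case: (i == p j); rewrite ?oner_eq0 ?eqxx. Qed.

Lemma mono_decomp (A : M) p : mono_with A p ->
  A = diag_mx (\row_i A i ((p^-1)%g i)) *m mon p.
Proof.
move=> H; rewrite mul_diag_mx; apply/matrixP => i j; rewrite !mxE.
case: (i =P p j) => [->|/eqP ne]; first by rewrite permK mulr1.
by rewrite mulr0 (mono_E H i j) (negPf ne).
Qed.

Lemma mono_unit (A : M) p : mono_with A p -> A \in unitmx.
Proof.
move=> H; rewrite (mono_decomp H) unitmx_mul mon_unit andbT unitmxE det_diag unitfE.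
by apply/prodf_neq0 => i _; rewrite mxE H permKV.
Qed.

Lemma diag_eq (D : M) : is_diag_mx D -> D = diag_mx (\row_i D i i).
Proof.
move=> /is_diag_mxP H; apply/matrixP => i j; rewrite !mxE.
case: (i =P j) => [->|/eqP ne]; first by rewrite mulr1n.
by rewrite mulr0n H //; apply: contra ne => /eqP /val_inj ->.
Qed.

Lemma Tset_conj (A D : M) p : mono_with A p -> D \in unitmx -> is_diag_mx D ->
  A *m D *m invmx A = diag_mx (\row_i D ((p^-1)%g i) ((p^-1)%g i)).
Proof.
move=> H Du Dd.
have -> : A *m D = diag_mx (\row_i D ((p^-1)%g i) ((p^-1)%g i)) *m A.
  rewrite {1}(diag_eq Dd) mul_mx_diag mul_diag_mx; apply/matrixP => i j; rewrite !mxE.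
  case: (i =P p j) => [->|/eqP ne]; first by rewrite permK mulrC.
  by rewrite (mono_E H i j) (negPf ne) mulr0 mul0r.
by rewrite -mulmxA mulmxV ?mulmx1 //; apply: mono_unit H.
Qed.

End Mono.
Section Xmat.
Variable K : fieldType.
Variable k : nat.
Local Notation M := ('M[K]_k).

Definition Xm (x y : 'I_k) (e : K) : M := 1%:M + e *: delta_mx x y.

Lemma XE x y e i j : Xm x y e i j = (i == j)%:R + e * ((i == x) && (j == y))%:R.
Proof. by rewrite !mxE. Qed.

Lemma mulmx_X (B : M) x y e i j : (B *m Xm x y e) i j = B i j + e * B i x * (j == y)%:R.
Proof.
rewrite mulmxDr mulmx1 -scalemxAr !mxE; congr (_ + _); rewrite -mulrA; congr (_ * _).
rewrite (bigD1 x) //= big1 ?addr0; first by rewrite mxE eqxx.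
by move=> l ne; rewrite mxE (negPf ne) mulr0.
Qed.

Lemma Xinv x y e : x != y -> Xm x y (- e) *m Xm x y e = 1%:M.
Proof.
move=> ne; rewrite /Xm mulmxDr !mulmxDl mulmx1 mul1mx -!scalemxAl -!scalemxAr.
rewrite mul_delta_mx_0 1?eq_sym // mulmx1; apply/matrixP => i j; rewrite !mxE.
by rewrite !mulr0 addr0 mulNr addrNK.

Qed.

End Xmat.
Section BBlem.
Variable K : fieldType.
Variables m d : nat.
Local Notation n := (d * m)%N.
Local Notation M := ('M[K]_(d * m)).

Lemma ne_val k (i x : 'I_k) : i <> x -> (i : nat) <> x.
Proof. by move=> H E; apply: H; apply: val_inj. Qed.

Lemma BB_mulX (b : M) (x y : 'I_n) (e : K) : BB b -> (x < y)%N -> blk x = blk y -> BB (b *m Xm x y e).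
Proof.
case=> Hl Hd Hb xy bxy; split.
- move=> i j lt; rewrite mulmx_X Hl // add0r; case: (j =P y) => [Ej|_]; last by rewrite mulr0.
  by rewrite Hl ?mulr0 ?mul0r //; move: lt; rewrite Ej; lia.
- move=> i; rewrite mulmx_X; case: (i =P y) => [Ei|_]; last by rewrite mulr0 addr0.
  by rewrite Ei (Hl y x xy) mulr0 mul0r addr0.
- move=> i j ne; rewrite mulmx_X Hb // add0r; case: (j =P y) => [Ej|_]; last by rewrite mulr0.
  by rewrite Hb ?mulr0 ?mul0r // bxy -Ej.
Qed.

Lemma blk_tperm (x y i : 'I_n) : blk x = blk y -> blk (tperm x y i) = blk i.
Proof. by move=> E; case: tpermP => [->|->|]. Qed.

Lemma BB_swap (N : M) (x y : 'I_n) : (y : nat) = x.+1 -> blk x = blk y -> BB N -> N x y = 0 ->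
  BB (\matrix_(i, j) N (tperm x y i) (tperm x y j)).
Proof.
move=> Exy bxy [Hl Hd Hb] Nxy; split.
- move=> i j; rewrite mxE.
  case: (tpermP x y i) => [->|->|/ne_val nx /ne_val ny];
  case: (tpermP x y j) => [->|->|/ne_val nx' /ne_val ny'] => lt //; try lia;
  by apply: Hl; lia.
- by move=> i; rewrite mxE.
- by move=> i j ne; rewrite mxE Hb // !blk_tperm.
Qed.

Lemma BB_swaprow (N : M) (x y : 'I_n) : (y : nat) = x.+1 -> blk x = blk y ->
  (forall i j : 'I_n, (j < i)%N -> ((i : nat) = y -> (j : nat) <> x) -> N i j = 0) ->
  N x x = 0 -> N y x != 0 -> N x y != 0 -> (forall i : 'I_n, i != x -> N i i != 0) ->
  (forall i j : 'I_n, blk i != blk j -> N i j = 0) ->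
  BB (\matrix_(i, j) N (tperm x y i) j).
Proof.
move=> Exy bxy Hl Nxx Nyx Nxy Hd Hb; split.
- move=> i j; rewrite mxE.
  case: (tpermP x y i) => [->|->|/ne_val nx /ne_val ny] lt.
  + by apply: Hl; lia.
  + case: (j =P x) => [->//|/ne_val jx]; apply: Hl; lia.
  + by apply: Hl; lia.
- move=> i; rewrite mxE.
  case: (tpermP x y i) => [->|->|nx _] //; apply: Hd; exact/eqP.
- by move=> i j ne; rewrite mxE Hb // !blk_tperm.
Qed.

Lemma BB_Xconj (w : {perm 'I_n}) (x y : 'I_n) (e : K) : x != y ->
  blk ((w^-1)%g x) = blk ((w^-1)%g y) -> (e = 0 \/ ((w^-1)%g x < (w^-1)%g y)%N) ->
  BB (\matrix_(i, j) Xm x y e (w i) (w j)).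
Proof.
move=> nxy bw He.
have key : forall i j : 'I_n, (w i == x) && (w j == y) -> i = (w^-1)%g x /\ j = (w^-1)%g y.
  by move=> i j /andP [/eqP <- /eqP <-]; rewrite !permK.
split.
- move=> i j lt; rewrite mxE XE.
  have -> : (w i == w j) = false.
    by apply/negbTE; apply/eqP => /perm_inj E; move: lt; rewrite E ltnn.
  rewrite add0r; case E: ((w i == x) && (w j == y)); last by rewrite mulr0.
  have [Ei Ej] := key _ _ E.
  case: He => [->|lt']; first by rewrite mul0r.
  by move: lt lt'; rewrite Ei Ej; lia.
- move=> i; rewrite mxE XE eqxx.
  have -> : (w i == x) && (w i == y) = false.
    by apply/andP => [[/eqP -> /eqP E]]; move: nxy; rewrite E eqxx.
  by rewrite mulr0 addr0 oner_eq0.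
- move=> i j ne; rewrite mxE XE.
  have -> : (w i == w j) = false.
    by apply/negbTE; apply/eqP => /perm_inj E; move: ne; rewrite E eqxx.
  rewrite add0r; case E: ((w i == x) && (w j == y)); last by rewrite mulr0.
  have [Ei Ej] := key _ _ E.
  by move: ne; rewrite Ei Ej bw eqxx.
Qed.

Lemma BB_X (x y : 'I_n) (e : K) : (x < y)%N -> blk x = blk y -> BB (Xm x y e : M).
Proof.
move=> lt bxy.
have -> : (Xm x y e : M) = \matrix_(i, j) Xm x y e ((1%g : {perm 'I_n}) i) ((1%g : {perm 'I_n}) j).
  by apply/matrixP => i j; rewrite mxE !perm1.
apply: BB_Xconj; rewrite ?invg1 ?perm1 //; last by right.
by apply/eqP => E; move: lt; rewrite E ltnn.
Qed.

End BBlem.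
Section Final.
Variable K : fieldType.
Variables m d : nat.
Local Notation n := (d * m)%N.
Local Notation M := ('M[K]_(d * m)).

Lemma Om_prop t : t \in Omega m d -> exists s : {perm 'I_d}, forall j a, t (idx j a) = idx (s j) a.
Proof. by move=> /imsetP [s _ ->]; exists s => j a; rewrite emb_idx ffunE perm1. Qed.

Lemma BB_Om (u : {perm 'I_n}) (A : M) :
  (exists s : {perm 'I_d}, forall j a, u (idx j a) = idx (s j) a) -> BB A ->
  BB (\matrix_(i, k) A (u i) (u k)).
Proof.
move=> [s Hs] [Hl Hd Hb].
have Hu : forall i, u i = idx (s (blk i)) (pos i) by move=> i; rewrite -Hs idx_blk_pos.
have Hbk : forall i, blk (u i) = s (blk i) by move=> i; rewrite Hu blk_idx.
have Hps : forall i, pos (u i) = pos i by move=> i; rewrite Hu pos_idx.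
split.
- move=> i k lt; rewrite mxE; case: (blk i =P blk k) => [E|/eqP ne].
    apply: Hl; rewrite (ltn_sameblk (k := u i)); last by rewrite !Hbk E.
    by rewrite !Hps -(ltn_sameblk (esym E)).
  by apply: Hb; rewrite !Hbk; apply: contra ne => /eqP /perm_inj ->.
- by move=> i; rewrite mxE.
- move=> i k ne; rewrite mxE; apply: Hb; rewrite !Hbk; apply: contra ne => /eqP /perm_inj ->.
  by [].
Qed.

Lemma conj_mon (t : {perm 'I_n}) (A : M) :
  mon t *m A *m invmx (mon t) = \matrix_(i, k) A ((t^-1)%g i) ((t^-1)%g k).
Proof. by rewrite invmx_mon mul_mx_mon mul_mon_mx; apply/matrixP => i k; rewrite !mxE. Qed.

Lemma part5 t : t \in Omega m d -> forall A : M, Bset A <-> Bset (mon t *m A *m invmx (mon t)).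
Proof.
move=> Ht A; rewrite conj_mon !Bset_BB; split.
  by apply: BB_Om; apply: Om_prop; apply: Om_inv.
move=> H; have := BB_Om (Om_prop Ht) H.
have -> // : \matrix_(i, k) (\matrix_(i0, k0) A ((t^-1)%g i0) ((t^-1)%g k0)) (t i) (t k) = A.
by apply/matrixP => i k; rewrite !mxE !permK.
Qed.

Lemma BB1 : BB (1%:M : M).
Proof.
split.
- by move=> i k lt; rewrite mxE; case: eqP => // E; move: lt; rewrite E ltnn.
- by move=> i; rewrite mxE eqxx oner_eq0.
- by move=> i k ne; rewrite mxE; case: eqP => // E; move: ne; rewrite E eqxx.
Qed.

Lemma part6 t : (0 < m)%N -> t \in Omega m d -> t != 1%g ->
  ~ (forall A : M, Bset A <-> inBcoset 1%:M (mon t) A).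
Proof.
move=> m0 Ht nt H.
have [b /Bset_BB [_ _ Hb] E] := (H 1%:M).1 (proj2 (Bset_BB _) BB1).
have Eb : b = mon (t^-1)%g.
  have := congr1 (fun X => X *m mon (t^-1)%g) E.
  by rewrite /= !mul1mx -mulmxA monM mulVg mon1 mulmx1 => ->.
move: Ht nt => /imsetP [s _ Et] nt.
have [j sj] : exists j, s j != j.
  apply/existsP; rewrite -negb_forall; apply: contra nt => /forallP H'.
  rewrite Et -(emb1 m d); apply/eqP; congr emb; apply/permP => j; rewrite perm1; apply/eqP; exact: H'.
set a0 := Ordinal m0.
have Ht' : t (idx j a0) = idx (s j) a0 by rewrite Et emb_idx ffunE perm1.
have := Hb (idx j a0) (t (idx j a0)).
rewrite Eb monE permK eqxx Ht' !blk_idx eq_sym sj => /(_ isT) /eqP.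
by rewrite oner_eq0.
Qed.

End Final.
Section Part7.
Variable K : fieldType.
Variables m d : nat.
Local Notation n := (d * m)%N.
Local Notation M := ('M[K]_(d * m)).

Lemma blk_emb (v : {ffun 'I_d -> {perm 'I_m}}) (s : {perm 'I_d}) i : blk (emb v s i) = s (blk i).
Proof. by rewrite embE blk_idx. Qed.

Lemma part7 (s w : {perm 'I_n}) : s \in Sgen m d -> w \in Wr m d ->
     (forall A : M, inBcoset (mon s) (mon w) A ->
        inBdcoset (mon s *m mon w) A \/ inBdcoset (mon w) A) /\
     ~ (forall A : M, inBcoset (mon s) 1%:M A <-> inBcoset 1%:M (mon s) A).
Proof.
rewrite inE => /existsP [j /existsP [a /existsP [b /andP [/eqP ab /eqP ->]]]] Hw.
rewrite sgenE.
set x := idx j a; set y := idx j b; set s' := tperm x y.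
have Exy : (y : nat) = x.+1 by rewrite /= ab; lia.
have bxy : blk x = blk y by rewrite !blk_idx.
have xy : (x < y)%N by rewrite Exy.
have nxy : x != y by apply/eqP => E; move: xy; rewrite E ltnn.
have bw : blk ((w^-1)%g x) = blk ((w^-1)%g y).
  case/imset2P: Hw => v sg _ _ Ew.
  apply: (@perm_inj _ sg); rewrite -!(blk_emb v) -Ew !permKV //.
have hss : (mon s' : M) *m mon s' = 1%:M by rewrite monM tperm2 mon1.
have hww : (mon w : M) *m mon (w^-1)%g = 1%:M by rewrite monM mulVg mon1.
split.
  move=> A [bb /Bset_BB Bb ->].
  have Bb' := Bb; case: Bb' => [Hl Hd Hb].
  set c := bb x y.
  case: (boolP (((w^-1)%g x < (w^-1)%g y)%N || (c == 0))) => Hc.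
    set e := c / bb x x.
    left; exists (mon s' *m (bb *m Xm x y (- e)) *m mon s'), (mon (w^-1)%g *m Xm x y e *m mon w).
    split.
    - apply/Bset_BB; rewrite mul_mx_mon mul_mon_mx.
      have -> : \matrix_(i, j0) (\matrix_(i0, j1) (bb *m Xm x y (- e)) ((s'^-1)%g i0) j1) i (s' j0)
          = \matrix_(i, j0) (bb *m Xm x y (- e)) (s' i) (s' j0).
        by apply/matrixP => i k; rewrite !mxE /s' tpermV.
      apply: BB_swap => //; first exact: BB_mulX.
      by rewrite mulmx_X eqxx mulr1 mulNr /e divfK ?subrr.
    - apply/Bset_BB; rewrite mul_mx_mon mul_mon_mx.
      have -> : \matrix_(i, j0) (\matrix_(i0, j1) (Xm x y e) (((w^-1)^-1)%g i0) j1) i (w j0)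
          = \matrix_(i, j0) (Xm x y e) (w i) (w j0).
        by apply/matrixP => i k; rewrite !mxE invgK.
      apply: BB_Xconj => //; case/orP: Hc => [lt|/eqP c0]; [by right | left].
      by rewrite /e c0 mul0r.
    - rewrite -!mulmxA (mulmxA (mon s') (mon s')) hss mul1mx.
      rewrite (mulmxA (mon w) (mon (w^-1)%g)) hww mul1mx.
      by rewrite (mulmxA (Xm x y (- e))) Xinv // mul1mx.
  move: Hc; rewrite negb_or => /andP [nlt nc].
  have lt : ((w^-1)%g y < (w^-1)%g x)%N.
    rewrite ltn_neqAle leqNgt nlt andbT; apply: contra nxy => /eqP /val_inj /perm_inj ->.
    by [].
  set e := bb x x / c.
  have e0 : e != 0 by rewrite /e mulf_neq0 ?invr_eq0.
  right; exists (mon s' *m (bb *m Xm y x (- e))), (mon (w^-1)%g *m Xm y x e *m mon w).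
  split.
  - apply/Bset_BB; rewrite mul_mon_mx.
    have -> : \matrix_(i0, j1) (bb *m Xm y x (- e)) ((s'^-1)%g i0) j1
        = \matrix_(i0, j1) (bb *m Xm y x (- e)) (s' i0) j1.
      by apply/matrixP => i k; rewrite !mxE /s' tpermV.
    apply: BB_swaprow => //.
    + move=> i k lt' Hik; rewrite mulmx_X Hl // add0r.
      case: (k =P x) => [Ek|_]; last by rewrite mulr0.
      rewrite Hl ?mulr0 ?mul0r //.
      have : (i : nat) <> y by move=> Ei; apply: (Hik Ei); rewrite Ek.
      move: lt'; rewrite Ek; lia.
    + by rewrite mulmx_X eqxx mulr1 mulNr /e /c divfK ?subrr.
    + by rewrite mulmx_X eqxx mulr1 (Hl y x xy) add0r mulNr oppr_eq0 mulf_neq0.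
    + by rewrite mulmx_X (eq_sym y x) (negPf nxy) mulr0 addr0.
    + by move=> i ne; rewrite mulmx_X (negPf ne) mulr0 addr0.
    + move=> i k ne; rewrite mulmx_X Hb // add0r.
      case: (k =P x) => [Ek|_]; last by rewrite mulr0.
      by rewrite Hb ?mulr0 ?mul0r // -bxy -Ek.
  - apply/Bset_BB; rewrite mul_mx_mon mul_mon_mx.
    have -> : \matrix_(i, j0) (\matrix_(i0, j1) (Xm y x e) (((w^-1)^-1)%g i0) j1) i (w j0)
        = \matrix_(i, j0) (Xm y x e) (w i) (w j0).
      by apply/matrixP => i k; rewrite !mxE invgK.
    by apply: BB_Xconj; rewrite 1?eq_sym //; right.
  - rewrite -!mulmxA (mulmxA (mon w) (mon (w^-1)%g)) hww mul1mx.
    by rewrite (mulmxA (Xm y x (- e))) Xinv 1?eq_sym // mul1mx.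
move=> H.
have [b' /Bset_BB [Hl _ _] E] :=
  (H (mon s' *m Xm x y 1 *m 1%:M)).1 (ex_intro2 _ _ (Xm x y 1) (proj2 (Bset_BB _) (BB_X 1 xy bxy)) erefl).
have Eb : b' = mon s' *m Xm x y 1 *m mon s'.
  by rewrite mulmx1 in E; rewrite E mul1mx -mulmxA hss mulmx1.
have := Hl y x xy; rewrite Eb mul_mx_mon mul_mon_mx !mxE /s' tpermV tpermR tpermL.
by rewrite (negPf nxy) !eqxx add0r mulr1 => /eqP; rewrite oner_eq0.
Qed.

End Part7.
Unset Implicit Arguments.

Theorem proposition2p6 (K : fieldType) (m d : nat) :
  (0 < m)%N -> (0 < d)%N ->
  (* (1) B_m^d \cap N_{m wr d} = T_m^d *)
  (forall A : 'M[K]_(d * m), Bset A /\ Nset A <-> Tset A) /\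
  (* (2) T_m^d is normal in N_{m wr d} *)
  (forall A D : 'M[K]_(d * m), Nset A -> Tset D -> Tset (A *m D *m invmx A)) /\
  (* (3) N_{m wr d} / T_m^d ~= Sigma_m wr Sigma_d via the underlying permutation:
         W is a group, the underlying-permutation map is multiplicative,
         onto W, with kernel T_m^d *)
  group_set (Wr m d) /\
  (forall (A A' : 'M[K]_(d * m)) (p p' : {perm 'I_(d * m)}),
      mono_with A p -> mono_with A' p' -> mono_with (A *m A') (p' * p)%g) /\
  (forall p, p \in Wr m d -> exists A : 'M[K]_(d * m), mono_with A p) /\
  (forall (A : 'M[K]_(d * m)) p, mono_with A p -> (p = 1%g <-> Tset A)) /\
  (* (4) Sigma_m wr Sigma_d = W_0 x| Omega, W_0 = Sigma_m^d generated by the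
         involutions s_a^(j) *)
  W0 m d = <<Sgen m d>>%g /\
  (forall s, s \in Sgen m d -> s != 1%g /\ (s * s = 1)%g) /\
  (W0 m d <| Wr m d)%g /\
  (W0 m d * Omega m d = Wr m d)%g /\
  (W0 m d :&: Omega m d = 1)%g /\
  (* (5) every t in Omega normalizes B_m^d and the set of generators *)
  (forall t, t \in Omega m d ->
     (forall A : 'M[K]_(d * m), Bset A <-> Bset (mon t *m A *m invmx (mon t))) /\
     (Sgen m d :^ t = Sgen m d)%g) /\
  (* (6) B t <> B for 1 <> t in Omega *)
  (forall t, t \in Omega m d -> t != 1%g ->
     ~ (forall A : 'M[K]_(d * m), Bset A <-> inBcoset 1%:M (mon t) A)) /\
  (* (7) s B w \subseteq B s w B \cup B w B  and  s B <> B s *)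
  (forall s w, s \in Sgen m d -> w \in Wr m d ->
     (forall A : 'M[K]_(d * m), inBcoset (mon s) (mon w) A ->
        inBdcoset (mon s *m mon w) A \/ inBdcoset (mon w) A) /\
     ~ (forall A : 'M[K]_(d * m), inBcoset (mon s) 1%:M A <-> inBcoset 1%:M (mon s) A)).
Proof.
move=> m0 d0.
split; first by move=> A; apply: part1.
split.
  move=> A D [p _ H] [Du Dd]; rewrite (Tset_conj H Du Dd); apply: diag_Tset.
    by move=> i k ne; rewrite mxE (negPf ne) mulr0n.
  move=> i; rewrite !mxE eqxx mulr1n; exact: (Tset_diag (conj Du Dd)).
split; first exact: Wr_group.
split; first by move=> A A' p p'; apply: mono_mul.
split; first by move=> p _; exists (mon p); apply: mono_mon.
split; first by move=> A p; apply: mono_Tset.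
split; first exact: W0_gen.
split; first exact: Sgen_inv.
split; first exact: W0_normal.
split; first exact: W0_Omega.
split; first exact: W0_Omega1.
split; first by move=> t Ht; split; [exact: part5 | exact: Sgen_norm].
split; first by move=> t; apply: part6.
by move=> s w; apply: part7.
Qed.
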